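(* Let $\mathcal{D}\subset\mathbb{R}^d$, let $k$ be a positive definite kernel on $\mathcal{D}\times\mathcal{D}$, and let $\epsilon\ge 0$. Let $f^*:\mathcal{D}\to\mathbb{R}$ and let $\tilde f:\mathcal{D}\to\mathbb{R}$ satisfy $|\tilde f(x)-f^*(x)|\le\epsilon$ for all $x\in\mathcal{D}$; write $m(x)=f^*(x)-\tilde f(x)$, so $m:\mathcal{D}\to[-\epsilon,\epsilon]$. Let $x_1,\dots,x_t\in\mathcal{D}$ ($t\ge1$) be any points and $\eta_1,\dots,\eta_t$ any real noise values; set $y^*_i=f^*(x_i)+\eta_i$ and $y_i=y^*_i-m(x_i)=\tilde f(x_i)+\eta_i$. For $\lambda>0$ define $$\mu_t(x)=k_t(x)^T(K_t+\lambda I_t)^{-1}Y_t,\qquad \mu^*_t(x)=k_t(x)^T(K_t+\lambda I_t)^{-1}Y^*_t,$$ $$\sigma_t^2(x)=k(x,x)-k_t(x)^T(K_t+\lambda I_t)^{-1}k_t(x),$$ where $k_t(x)=[k(x_1,x),\dots,k(x_t,x)]^T$, $K_t=[k(x_s,x_{s'})]_{s,s'\le t}$, $Y_t=[y_1,\dots,y_t]^T$, $Y^*_t=[y^*_1,\dots,y^*_t]^T$. Then for every $x\in\mathcal{D}$, $$|\mu_t(x)-\mu^*_t(x)|\le \frac{\epsilon\sqrt{t}}{\sqrt{\lambda}}\,\sigma_t(x).$$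
   Context: $\mu_t,\sigma_t^2$ are the Gaussian-process posterior mean and variance (kernel ridge regression estimates) with regularization/noise parameter $\lambda$; $\mu^*_t$ is the same mean estimator computed from observations of $f^*$ rather than of $\tilde f$. *)

(* Defs.v *)
From mathcomp Require Import all_boot all_order all_algebra.
Set Implicit Arguments. Unset Strict Implicit. Unset Printing Implicit Defensive.
Import Order.TTheory GRing.Theory Num.Theory.
Local Open Scope ring_scope.

Section GP.
Variables (R : rcfType) (d : nat).
Notation pt := 'rV[R]_d.

(* Positive definite kernel on D x D (in the kernel-methods sense):
   symmetric on D, and every Gram matrix of points of D is positive
   semidefinite. *)
Definition pd_kernel (D : pt -> Prop) (k : pt -> pt -> R) : Prop :=
  (forall x y, D x -> D y -> k x y = k y x) /\
  (forall (n : nat) (xs : 'I_n -> pt) (c : 'I_n -> R),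
      (forall i, D (xs i)) ->
      0 <= \sum_(i < n) \sum_(j < n) c i * c j * k (xs i) (xs j)).

Definition kvec (k : pt -> pt -> R) (t : nat) (xs : 'I_t -> pt) (x : pt)
  : 'cV[R]_t := \col_i k (xs i) x.

Definition gram (k : pt -> pt -> R) (t : nat) (xs : 'I_t -> pt) : 'M[R]_t :=
  \matrix_(i, j) k (xs i) (xs j).

Definition gp_mean (k : pt -> pt -> R) (lam : R) (t : nat) (xs : 'I_t -> pt)
  (Y : 'cV[R]_t) (x : pt) : R :=
  ((kvec k xs x)^T *m invmx (gram k xs + lam%:M) *m Y) 0 0.

Definition gp_var (k : pt -> pt -> R) (lam : R) (t : nat) (xs : 'I_t -> pt)
  (x : pt) : R :=
  k x x - ((kvec k xs x)^T *m invmx (gram k xs + lam%:M) *m kvec k xs x) 0 0.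

End GP.

(* Main.v *)
Require Import Defs.
From mathcomp Require Import all_boot all_order all_algebra.
From mathcomp Require Import ring lra.
Import Order.TTheory GRing.Theory Num.Theory.
Local Open Scope ring_scope.

Lemma cs_ineq (R : rcfType) n (a b : 'I_n -> R) :
  (\sum_i a i * b i) ^+ 2 <= (\sum_i a i ^+ 2) * (\sum_i b i ^+ 2).
Proof.
have H0 : 0 <= \sum_i \sum_j (a i * b j - a j * b i) ^+ 2.
  by apply: sumr_ge0 => i _; apply: sumr_ge0 => j _; exact: sqr_ge0.
have E1 : (\sum_i a i ^+ 2) * (\sum_i b i ^+ 2) = \sum_i \sum_j a i ^+ 2 * b j ^+ 2.
  by rewrite big_distrl; apply: eq_bigr => i _; rewrite big_distrr.
have E2 : (\sum_i a i ^+ 2) * (\sum_i b i ^+ 2) = \sum_i \sum_j a j ^+ 2 * b i ^+ 2.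
  rewrite mulrC big_distrl; apply: eq_bigr => i _; rewrite big_distrr /=.
  by apply: eq_bigr => j _; rewrite mulrC.
have E3 : (\sum_i a i * b i) ^+ 2 = \sum_i \sum_j (a i * b i) * (a j * b j).
  by rewrite expr2 big_distrl; apply: eq_bigr => i _; rewrite big_distrr.
have E : \sum_i \sum_j (a i * b j - a j * b i) ^+ 2 =
   \sum_i \sum_j a i ^+ 2 * b j ^+ 2 + \sum_i \sum_j a j ^+ 2 * b i ^+ 2
   - 2 * \sum_i \sum_j (a i * b i) * (a j * b j).
  rewrite mulr_sumr -big_split -sumrB /=; apply: eq_bigr => i _.
  rewrite mulr_sumr -big_split -sumrB /=; apply: eq_bigr => j _.
  ring.
rewrite E -E1 -E2 -E3 in H0.
lra.
Qed.
Definition ext {T : Type} {t} (f : 'I_t -> T) (a : T) (i : 'I_(t + 1)) : T :=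
  match split i with inl j => f j | inr _ => a end.

Lemma sum_ext (R : rcfType) (T : Type) t (f : 'I_t -> T) (a : T) (G : T -> R) :
  \sum_(i < t + 1) G (ext f a i) = \sum_(i < t) G (f i) + G a.
Proof.
rewrite big_split_ord big_ord1 /=; congr (_ + _).
  by apply: eq_bigr => i _; rewrite /ext (unsplitK (inl _ i)).
by rewrite /ext (unsplitK (inr _ ord0)).
Qed.

Lemma qform (R : rcfType) d (k : 'rV[R]_d -> 'rV[R]_d -> R) t (xs : 'I_t -> 'rV[R]_d) (c : 'rV[R]_t) :
  ((c *m gram k xs) *m c^T) 0 0 = \sum_i \sum_j c 0 i * c 0 j * k (xs i) (xs j).
Proof.
rewrite !mxE; under eq_bigr do rewrite !mxE big_distrl /=.
rewrite exchange_big /=; apply: eq_bigr => i _; apply: eq_bigr => j _.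
by rewrite !mxE; ring.
Qed.

Theorem lemma2 (R : rcfType) (d : nat) (D : 'rV[R]_d -> Prop)
  (k : 'rV[R]_d -> 'rV[R]_d -> R) (eps : R)
  (fstar ftilde : 'rV[R]_d -> R) (t : nat) (xs : 'I_t -> 'rV[R]_d)
  (eta : 'I_t -> R) (lam : R) :
  pd_kernel D k -> 0 <= eps ->
  (forall x, D x -> `|ftilde x - fstar x| <= eps) ->
  (0 < t)%N -> (forall i, D (xs i)) -> 0 < lam ->
  let m := fun x => fstar x - ftilde x in
  let Ystar : 'cV[R]_t := \col_i (fstar (xs i) + eta i) in
  let Y : 'cV[R]_t := \col_i (fstar (xs i) + eta i - m (xs i)) in
  forall x, D x ->
    `|gp_mean k lam xs Y x - gp_mean k lam xs Ystar x|
      <= eps * Num.sqrt t%:R / Num.sqrt lam * Num.sqrt (gp_var k lam xs x).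
Proof.
move=> [ksym kpsd] eps0 hf t0 hD lam0 m Ystar Y x Dx.
set K := gram k xs.
set A := K + lam%:M.
set kv := kvec k xs x.
have qpos : forall c : 'rV[R]_t, 0 <= ((c *m K) *m c^T) 0 0.
  move=> c; rewrite qform; exact: (kpsd t xs (fun i => c 0 i)).
have sq : forall c : 'rV[R]_t, (c *m c^T) 0 0 = \sum_i c 0 i ^+ 2.
  by move=> c; rewrite mxE; apply: eq_bigr => i _; rewrite mxE expr2.
have Aunit : A \in unitmx.
  rewrite unitmxE unitfE; apply/negP => /det0P [w wn0 wA].
  have : ((w *m A) *m w^T) 0 0 = 0 by rewrite wA mul0mx mxE.
  rewrite /A mulmxDr mul_mx_scalar mulmxDl -scalemxAl [in X in X -> _]mxE [X in _ + X]mxE sq.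
  move=> h.
  have hs : \sum_i w 0 i ^+ 2 = 0.
    have := qpos w; have : 0 <= \sum_i w 0 i ^+ 2 by apply: sumr_ge0 => i _; exact: sqr_ge0.
    move=> h1 h2; have /eqP : lam * \sum_i w 0 i ^+ 2 = 0 by nra.
    by rewrite mulf_eq0 (gt_eqF lam0) => /eqP.
  move/eqP: wn0; apply; apply/rowP => j; rewrite mxE.
  have := @psumr_eq0P _ _ _ _ (fun i _ => sqr_ge0 (w 0 i)) hs j isT.
  by move/eqP; rewrite sqrf_eq0 => /eqP.
have [v vE] : {v : 'cV[R]_t | v = invmx A *m kv} by exists (invmx A *m kv).
have Av : A *m v = kv by rewrite vE mulmxA mulmxV // mul1mx.
have AT : A^T = A.
  by apply/matrixP => i j; rewrite /A /K !mxE (ksym _ _ (hD j) (hD i)) eq_sym.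
have kvA : kv^T *m invmx A = v^T by rewrite vE trmx_mul trmx_inv AT.
set S := \sum_i v i 0 ^+ 2.
set Q := ((v^T *m K) *m v) 0 0.
set P := \sum_i v i 0 * kv i 0.
have S0 : 0 <= S by apply: sumr_ge0 => i _; exact: sqr_ge0.
have hvar : gp_var k lam xs x = k x x - P.
  rewrite /gp_var -/K -/A -/kv kvA mxE; congr (_ - _).
  by apply: eq_bigr => i _; rewrite mxE.
have hP : P = Q + lam * S.
  have -> : P = (v^T *m kv) 0 0 by rewrite /P mxE; apply: eq_bigr => i _; rewrite [v^T _ _]mxE.
  rewrite -Av /A mulmxDl mulmxDr mul_scalar_mx -scalemxAr mxE [X in _ + X]mxE mulmxA.
  congr (_ + _); congr (_ * _); rewrite mxE; apply: eq_bigr => i _; rewrite mxE expr2 //.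
have hpsd : 0 <= Q - 2 * P + k x x.
  have := kpsd (t + 1) (fun i => (ext (fun j => (xs j, v j 0)) (x, -1) i).1)
                       (fun i => (ext (fun j => (xs j, v j 0)) (x, -1) i).2).
  have Hd : forall i, D (ext (fun j => (xs j, v j 0)) (x, -1) i).1.
    by move=> i; rewrite /ext; case: split.
  move=> /(_ Hd).
  rewrite (@sum_ext _ _ _ _ _ (fun z : 'rV[R]_d * R => \sum_(j < t + 1) z.2 * (ext (fun j => (xs j, v j 0)) (x, -1) j).2 * k z.1 (ext (fun j => (xs j, v j 0)) (x, -1) j).1)) /=.
  under eq_bigr => i _ do rewrite (@sum_ext _ _ _ _ _ (fun z : 'rV[R]_d * R => v i 0 * z.2 * k (xs i) z.1)) /=.
  rewrite (@sum_ext _ _ _ _ _ (fun z : 'rV[R]_d * R => -1 * z.2 * k x z.1)) /= big_split /=.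
  have -> : Q = \sum_i \sum_j v i 0 * v j 0 * k (xs i) (xs j).
    rewrite /Q -{2}(trmxK v) qform; apply: eq_bigr => i _; apply: eq_bigr => j _.
    by rewrite !mxE.
  have -> : \sum_(i < t) v i 0 * -1 * k (xs i) x = - P.
    rewrite /P -sumrN; apply: eq_bigr => i _; rewrite /kv /kvec mxE; ring.
  have -> : \sum_(i < t) -1 * v i 0 * k x (xs i) = - P.
    rewrite /P -sumrN; apply: eq_bigr => i _; rewrite /kv /kvec mxE (ksym _ _ Dx (hD i)); ring.
  move=> h; lra.
have hdiff : gp_mean k lam xs Y x - gp_mean k lam xs Ystar x = \sum_i v i 0 * (- m (xs i)).
  rewrite /gp_mean -/K -/A -/kv kvA !mxE -sumrB; apply: eq_bigr => i _.
  rewrite !mxE; ring.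
have hM : \sum_(i < t) (- m (xs i)) ^+ 2 <= t%:R * eps ^+ 2.
  apply: le_trans (_ : \sum_(i < t) eps ^+ 2 <= _).
    apply: ler_sum => i _.
    have : `|m (xs i)| <= eps by rewrite /m distrC; apply: hf.
    case/ler_normlP => h1 h2; nra.
  by rewrite sumr_const card_ord mulr_natl.
have hCS := @cs_ineq _ _ (fun i => v i 0) (fun i => - m (xs i)).
rewrite /= -hdiff in hCS.
set dd := gp_mean k lam xs Y x - gp_mean k lam xs Ystar x.
set V := gp_var k lam xs x.
have hV : lam * S <= V by rewrite /V hvar; lra.
have V0 : 0 <= V by nra.
have hsq : dd ^+ 2 <= eps ^+ 2 * t%:R / lam * V.
  have h1 : dd ^+ 2 <= S * (t%:R * eps ^+ 2).
    apply: le_trans hCS _; apply: ler_wpM2l => //.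
  have h2 : S <= V / lam by rewrite ler_pdivlMr // mulrC.
  have h3 : S * (t%:R * eps ^+ 2) <= V / lam * (t%:R * eps ^+ 2).
    by apply: ler_wpM2r => //; apply: mulr_ge0 => //; exact: sqr_ge0.
  have -> : eps ^+ 2 * t%:R / lam * V = V / lam * (t%:R * eps ^+ 2) by rewrite mulrC !mulrA; ring.
  exact: le_trans h3.
rewrite -sqrtr_sqr.
have -> : eps * Num.sqrt t%:R / Num.sqrt lam * Num.sqrt V = Num.sqrt (eps ^+ 2 * t%:R / lam * V).
  have e2 : 0 <= eps ^+ 2 by exact: sqr_ge0.
  have e2t : 0 <= eps ^+ 2 * t%:R by apply: mulr_ge0 => //; exact: ler0n.
  have e2tl : 0 <= eps ^+ 2 * t%:R / lam by apply: divr_ge0 => //; exact: ltW.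
  rewrite (sqrtrM _ e2tl) (sqrtrM _ e2t) (sqrtrM _ e2).
  by rewrite sqrtr_sqr ger0_norm // sqrtrV ?ltW.
exact: ler_wsqrtr.
Qed.
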